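(* Every endotactic reaction network is consistent.
   Context: A reaction network (E-graph) $\mathcal{G}=(\mathcal{V},\mathcal{E})$ is a finite directed graph whose nodes are distinct elements of a finite set $Y\subset\mathbb{R}^d_{\ge 0}$, with $\mathcal{V}\neq\emptyset$, every node incident to at least one edge, and no edge from a node to itself. For an edge $e$, $\mathbf{s}(e)$ is its source node, $\mathbf{t}(e)$ its target, $\mathbf{v}(e)=\mathbf{t}(e)-\mathbf{s}(e)$. $\mathcal{G}$ is consistent if there exist $a_e>0$, $e\in\mathcal{E}$, with $\sum_{e\in\mathcal{E}}a_e\mathbf{v}(e)=\mathbf{0}$. $\mathcal{G}$ is endotactic if for every $\mathbf{w}\in\mathbb{R}^d$ and $e_i\in\mathcal{E}$ with $\mathbf{w}\cdot\mathbf{v}(e_i)<0$ there exists $e_j\in\mathcal{E}$ with $\mathbf{w}\cdot(\mathbf{s}(e_j)-\mathbf{s}(e_i))<0$ and $\mathbf{w}\cdot\mathbf{v}(e_j)>0$. *)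

(* Defs.v *)
From mathcomp Require Import all_boot all_order all_algebra.
Set Implicit Arguments. Unset Strict Implicit. Unset Printing Implicit Defensive.
Import Order.TTheory GRing.Theory Num.Theory.
Local Open Scope ring_scope.

Definition dotv (R : realFieldType) (d : nat) (w x : 'rV[R]_d) : R :=
  \sum_(i < d) w ord0 i * x ord0 i.

Definition src (R : realFieldType) (d : nat) (e : 'rV[R]_d * 'rV[R]_d) := e.1.
Definition tgt (R : realFieldType) (d : nat) (e : 'rV[R]_d * 'rV[R]_d) := e.2.
Definition rvec (R : realFieldType) (d : nat) (e : 'rV[R]_d * 'rV[R]_d) :=
  e.2 - e.1.

Definition is_egraph (R : realFieldType) (d : nat)
    (V : seq 'rV[R]_d) (E : seq ('rV[R]_d * 'rV[R]_d)) : Prop :=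
  [/\ V != [::], uniq V & uniq E] /\
  [/\ (forall y, y \in V -> forall i, 0 <= y ord0 i),
      (forall e, e \in E -> (src e \in V) && (tgt e \in V)),
      (forall e, e \in E -> src e != tgt e) &
      (forall y, y \in V -> exists2 e, e \in E & (src e == y) || (tgt e == y))].

Definition consistent (R : realFieldType) (d : nat)
    (E : seq ('rV[R]_d * 'rV[R]_d)) : Prop :=
  exists a : 'rV[R]_d * 'rV[R]_d -> R,
    (forall e, e \in E -> 0 < a e) /\ \sum_(e <- E) a e *: rvec e = 0.

Definition endotactic (R : realFieldType) (d : nat)
    (E : seq ('rV[R]_d * 'rV[R]_d)) : Prop :=
  forall (w : 'rV[R]_d) ei, ei \in E -> dotv w (rvec ei) < 0 ->
    exists2 ej, ej \in E &
      (dotv w (src ej - src ei) < 0) /\ (0 < dotv w (rvec ej)).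

(* Main.v *)
Require Import Defs.
From mathcomp Require Import all_boot all_order all_algebra.
From mathcomp Require Import ring lra.
Import Order.TTheory GRing.Theory Num.Theory.
Local Open Scope ring_scope.

Lemma dotvDl (R : realFieldType) d (x y z : 'rV[R]_d) :
  dotv (x + y) z = dotv x z + dotv y z.
Proof. rewrite /dotv -big_split /=; apply: eq_bigr => k _; rewrite !mxE mulrDl. by []. Qed.
Lemma dotvZl (R : realFieldType) d c (x z : 'rV[R]_d) :
  dotv (c *: x) z = c * dotv x z.
Proof. rewrite /dotv mulr_sumr; apply: eq_bigr => k _; rewrite !mxE mulrA. by []. Qed.
Lemma dotvNl (R : realFieldType) d (x z : 'rV[R]_d) : dotv (- x) z = - dotv x z.
Proof. by rewrite -scaleN1r dotvZl mulN1r. Qed.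
Lemma dotvBl (R : realFieldType) d (x y z : 'rV[R]_d) :
  dotv (x - y) z = dotv x z - dotv y z.
Proof. by rewrite dotvDl dotvNl. Qed.
Lemma dotvDr (R : realFieldType) d (x y z : 'rV[R]_d) :
  dotv z (x + y) = dotv z x + dotv z y.
Proof. rewrite /dotv -big_split /=; apply: eq_bigr => k _; rewrite !mxE mulrDr. by []. Qed.
Lemma dotvZr (R : realFieldType) d c (x z : 'rV[R]_d) :
  dotv z (c *: x) = c * dotv z x.
Proof. rewrite /dotv mulr_sumr; apply: eq_bigr => k _; rewrite !mxE mulrCA. by []. Qed.
Lemma dotvNr (R : realFieldType) d (x z : 'rV[R]_d) : dotv z (- x) = - dotv z x.
Proof. by rewrite -scaleN1r dotvZr mulN1r. Qed.
Lemma dotvBr (R : realFieldType) d (x y z : 'rV[R]_d) :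
  dotv z (x - y) = dotv z x - dotv z y.
Proof. by rewrite dotvDr dotvNr. Qed.
Lemma dotv0r (R : realFieldType) d (z : 'rV[R]_d) : dotv z 0 = 0.
Proof. by rewrite -(scale0r 0) dotvZr mul0r. Qed.

Lemma dotv_sumr (R : realFieldType) d (w : 'rV[R]_d) m (l : nat -> R) (v : nat -> 'rV[R]_d) :
  dotv w (\sum_(i < m) l i *: v i) = \sum_(i < m) l i * dotv w (v i).
Proof.
elim: m => [|m IH]; first by rewrite !big_ord0 dotv0r.
by rewrite !big_ord_recr /= dotvDr dotvZr IH.
Qed.

Lemma dotv_self_gt0 (R : realFieldType) d (b : 'rV[R]_d) : b != 0 -> 0 < dotv b b.
Proof.
move=> nb.
have ge : forall k : 'I_d, true -> 0 <= b ord0 k * b ord0 k.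
  by move=> k _; rewrite -expr2 sqr_ge0.
rewrite lt_def sumr_ge0 ?andbT; last by move=> k _; apply: ge.
apply/eqP => H; move/eqP: nb; apply; apply/rowP => k.
have := psumr_eq0P ge H isT (i:=k).
by move/eqP; rewrite mulf_eq0 orbb mxE => /eqP.
Qed.

Lemma farkas (R : realFieldType) d (m : nat) : forall (v : nat -> 'rV[R]_d) (b : 'rV[R]_d),
 (exists l : nat -> R, (forall i, (i < m)%N -> 0 <= l i) /\ b = \sum_(i < m) l i *: v i)
 \/ (exists w, (forall i, (i < m)%N -> 0 <= dotv w (v i)) /\ dotv w b < 0).
Proof.
elim: m => [|m IH] v b.
  case: (eqVneq b 0) => [->|nb].
    by left; exists (fun _ => 0); split => //; rewrite big_ord0.
  right; exists (-b); split => [i //|]; rewrite dotvNl oppr_lt0; exact: dotv_self_gt0.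
have [[l [l0 bl]]|[w [w0 wb]]] := IH v b.
  left; exists (fun i => if (i < m)%N then l i else 0); split.
    by move=> i _; case: ifP => [/l0|] //.
  rewrite big_ord_recr /= ltnn scale0r addr0 bl; apply: eq_bigr => i _.
  by rewrite ltn_ord.
case: (leP 0 (dotv w (v m))) => [um|um].
  right; exists w; split => //.
  by move=> i; rewrite ltnS leq_eqVlt => /orP[/eqP->|/w0].
set al := dotv w (v m).
have alnz : al != 0 by rewrite lt_eqF.
pose v' i := v i - (dotv w (v i) / al) *: v m.
pose b' := b - (dotv w b / al) *: v m.
have [[l [l0 bl]]|[w' [w0' wb']]] := IH v' b'.
  left. pose c := dotv w b / al - \sum_(i<m) l i * (dotv w (v i) / al).
  exists (fun i => if (i < m)%N then l i else c); split.
    move=> i0 _; case: ifP => [/l0 //|_].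
    have -> : c = (dotv w b - \sum_(i<m) l i * dotv w (v i)) / al.
      rewrite /c mulrBl mulr_suml; congr (_ - _); rewrite mulr_suml; apply: eq_bigr => j _.
      by rewrite mulrA.
    apply: mulr_le0; last by rewrite invr_le0 ltW.
    have : 0 <= \sum_(i<m) l i * dotv w (v i).
      by apply: sumr_ge0 => i _; apply: mulr_ge0; [apply: l0|apply: w0].
    move: wb; lra.
  rewrite big_ord_recr /= ltnn.
  have -> : \sum_(i < m) (if (i < m)%N then l i else c) *: v i = \sum_(i < m) l i *: v i.
    by apply: eq_bigr => i _; rewrite ltn_ord.
  have E1 : \sum_(i < m) l i *: v' i = \sum_(i < m) l i *: v i
      - (\sum_(i<m) l i * (dotv w (v i) / al)) *: v m.
    rewrite /v' scaler_suml -sumrB; apply: eq_bigr => i _.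
    by rewrite scalerBr scalerA.
  have -> : b = b' + (dotv w b / al) *: v m by rewrite /b' subrK.
  rewrite bl E1 /c scalerBl.
  by rewrite addrAC -!addrA; congr (_ + _); rewrite addrC.
right; exists (w' - (dotv w' (v m) / al) *: w); split.
  move=> i; rewrite ltnS leq_eqVlt => /orP[/eqP->|lt].
    by rewrite dotvBl dotvZl -/al divfK // subrr.
  have := w0' i lt; rewrite /v' dotvBr dotvZr dotvBl dotvZl.
  suff -> : dotv w' (v m) / al * dotv w (v i) = dotv w (v i) / al * dotv w' (v m) by [].
  by field.
move: wb'; rewrite /b' dotvBr dotvZr dotvBl dotvZl.
suff -> : dotv w' (v m) / al * dotv w b = dotv w b / al * dotv w' (v m) by [].
by field.
Qed.

Lemma stiemke (R : realFieldType) d (m : nat) (v : nat -> 'rV[R]_d) :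
  (forall w, (forall i, (i < m)%N -> 0 <= dotv w (v i)) ->
     forall i, (i < m)%N -> dotv w (v i) <= 0) ->
  exists l : nat -> R, (forall i, (i < m)%N -> 0 < l i) /\ \sum_(i < m) l i *: v i = 0.
Proof.
move=> H.
suff : forall k, (k <= m)%N -> exists L : nat -> R, [/\ forall i, (i < m)%N -> 0 <= L i,
   forall i, (i < k)%N -> 0 < L i & \sum_(i < m) L i *: v i = 0].
  move=> /(_ m (leqnn m)) [L [_ L1 L2]]; by exists L.
elim=> [_|k IH km].
  exists (fun _ => 0); split => //.
  by rewrite big1 // => i _; rewrite scale0r.
have [L [L0 L1 L2]] := IH (ltnW km).
have [[l [l0 bl]]|[w [w0 wb]]] := @farkas R d m v (- v k); last first.
  have := H w w0 k km; rewrite dotvNr oppr_lt0 in wb.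
  by rewrite leNgt wb.
exists (fun i => L i + l i + (i == k)%:R); split.
- move=> i im; rewrite addr_ge0 ?ler0n // addr_ge0 //; [exact: L0|exact: l0].
- move=> i; rewrite ltnS leq_eqVlt => /orP[/eqP->|ik].
    by rewrite eqxx ltr_pwDr ?ltr01 // addr_ge0 //; [exact: L0|exact: l0].
  have im : (i < m)%N by apply: (leq_trans ik (ltnW km)).
  by rewrite ltr_wpDr ?ler0n // ltr_wpDr //; [exact: l0|exact: L1].
- have -> : \sum_(i < m) (L i + l i + (nat_of_ord i == k)%:R) *: v i =
     \sum_(i < m) L i *: v i + \sum_(i < m) l i *: v i + \sum_(i < m) (nat_of_ord i == k)%:R *: v i.
    by rewrite -!big_split /=; apply: eq_bigr => i _; rewrite !scalerDl.
  rewrite L2 -bl add0r (bigD1 (Ordinal km)) //= eqxx scale1r big1 ?addr0 ?addNr //.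
  move=> i /negbTE ik; suff -> : (nat_of_ord i == k) = false by rewrite scale0r.
  apply/negbTE/eqP => ik'; move/eqP: ik; apply; exact: val_inj.
Qed.

Theorem lemma5 (R : realFieldType) (d : nat)
    (V : seq 'rV[R]_d) (E : seq ('rV[R]_d * 'rV[R]_d)) :
  is_egraph V E -> endotactic E -> consistent E.
Proof.
move=> [[_ _ uE] _] endo.
pose x0 : 'rV[R]_d * 'rV[R]_d := (0, 0).
pose v i := rvec (nth x0 E i).
have [|L [L0 L1]] := @stiemke R d (size E) v.
  move=> w w0 i iE; rewrite leNgt; apply/negP => wpos.
  have : dotv (- w) (rvec (nth x0 E i)) < 0 by rewrite dotvNl oppr_lt0.
  move=> /(endo _ _ (mem_nth x0 iE)) [ej ejE [_ ]].
  rewrite dotvNl oppr_gt0 -(nth_index x0 ejE).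
  have iej : (index ej E < size E)%N by rewrite index_mem.
  move=> H2; have := w0 _ iej.
  by rewrite /v leNgt H2.
exists (fun e => L (index e E)); split.
  by move=> e eE; apply: L0; rewrite index_mem.
rewrite (big_nth x0) big_mkord -[RHS]L1; apply: eq_bigr => i _.
by rewrite index_uniq.
Qed.
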